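(* Let $X$ be a finite set of even cardinality, $s:\mathfrak S_X\otimes_{\min}\mathfrak S_X\to\mathbb C$ a state, and $\tilde s=s\circ(q_C\otimes q_C)$, regarded as a state of $\mathcal S_{X,\mathbb Z_2}\otimes_{\rm c}\mathcal S_{X,\mathbb Z_2}$. Suppose the correlation $p_{\tilde s}(a,b|x,y)=\tilde s(e_{x,a}\otimes f_{y,b})$ is synchronous, i.e. $p_{\tilde s}(a,b|x,x)=0$ whenever $a\ne b$. Then $\tilde s$ is an abstract self-test for $\mathcal S_C$: there is exactly one state in $\mathcal S_C$ whose restriction to $\mathcal S_{X,\mathbb Z_2}\otimes\mathcal S_{X,\mathbb Z_2}$ equals $\tilde s$.
   Context: $\mathcal A_{X,\mathbb Z_2}$ is the universal unital C*-algebra generated by projections $e_{x,a}$ ($x\in X$, $a\in\mathbb Z_2$) with $e_{x,0}+e_{x,1}=1$; $\mathcal S_{X,\mathbb Z_2}=\mathrm{span}\{e_{x,a}\}$; in the second tensor factor the generators are written $f_{y,b}$. The Clifford algebra $\mathfrak C_X$ is the universal unital C*-algebra generated by self-adjoint unitaries $u_x$, $x\in X$, with $u_xu_y+u_yu_x=0$ for $x\ne y$. $q_C:\mathcal A_{X,\mathbb Z_2}\to\mathfrak C_X$ is the surjective *-homomorphism with $q_C(e_{x,0})=(1+u_x)/2$, $q_C(e_{x,1})=(1-u_x)/2$ (its kernel is the ideal generated by $e_{x,0}e_{y,0}+e_{y,0}e_{x,0}-e_{x,0}-e_{y,0}+\frac12$, $x\ne y$). $\mathfrak S_X=q_C(\mathcal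 S_{X,\mathbb Z_2})=\mathrm{span}\{1,u_x:x\in X\}\subseteq\mathfrak C_X$. $\mathcal S_C$ is the set of states of $\mathcal A_{X,\mathbb Z_2}\otimes_{\min}\mathcal A_{X,\mathbb Z_2}$ that factor through $q_C\otimes q_C:\mathcal A_{X,\mathbb Z_2}\otimes_{\min}\mathcal A_{X,\mathbb Z_2}\to\mathfrak C_X\otimes_{\min}\mathfrak C_X$. *)

(* Defs.v *)
From HB Require Import structures.
From mathcomp Require Import all_boot all_order all_algebra.
From mathcomp Require Import complex mxtens.
From mathcomp Require Import reals.
Set Implicit Arguments. Unset Strict Implicit. Unset Printing Implicit Defensive.
Import Order.TTheory GRing.Theory Num.Theory.
Local Open Scope ring_scope.

Section Defs.
Variable C : numClosedFieldType.

Definition adjmx m n (A : 'M[C]_(m, n)) : 'M[C]_(n, m) := (map_mx Num.conj_op A)^T.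

Definition psdmx n (A : 'M[C]_n) : Prop :=
  adjmx A = A /\ forall v : 'cV[C]_n, 0 <= (adjmx v *m A *m v) 0 0.

Variable X : finType.

(* A family of matrices u_x satisfying the Clifford relations: a
   unital *-representation of the Clifford algebra C_X on C^d. *)
Definition clifford_rep d (u : X -> 'M[C]_d) : Prop :=
  [/\ forall x, adjmx (u x) = u x,
      forall x, u x *m u x = 1%:M
    & forall x y, x != y -> u x *m u y + u y *m u x = 0].

Variable d : nat.
Variable u : X -> 'M[C]_d.

(* spanning set {1} U {u_x} of the operator system S_X, indexed by option X *)
Definition genS (i : option X) : 'M[C]_d :=
  if i is Some x then u x else 1%:M.

(* membership in  S_X (x)_min S_X  inside  M_d (x) M_d = M_(d*d) *)
Definition in_SS (M : 'M[C]_(d * d)) : Prop :=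
  exists c : option X -> option X -> C,
    M = \sum_(i : option X) \sum_(j : option X) c i j *: (genS i *t genS j).

(* Clifford monomial u_S (product in enumeration order), S a subset of X *)
Definition monomial (S : {set X}) : 'M[C]_d :=
  foldr (fun x M => u x *m M) 1%:M (enum S).

(* membership in C_X (x)_min C_X (the image of the representation)
   inside M_(d*d): span of the u_S (x) u_T *)
Definition in_CC (M : 'M[C]_(d * d)) : Prop :=
  exists c : {set X} -> {set X} -> C,
    M = \sum_(S : {set X}) \sum_(T : {set X}) c S T *: (monomial S *t monomial T).

Definition state_on (V : 'M[C]_(d * d) -> Prop) (s : 'M[C]_(d * d) -> C) : Prop :=
  [/\ forall (a : C) M N, V M -> V N -> s (a *: M + N) = a * s M + s N,
      s 1%:M = 1
    & forall M, V M -> psdmx M -> 0 <= s M].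

(* projection e_{x,a} under q_C followed by the representation:
   (1 + (-1)^a u_x)/2 *)
Definition proj (x : X) (a : bool) : 'M[C]_d :=
  2^-1 *: (1%:M + (if a then - u x else u x)).

Definition corr (s : 'M[C]_(d * d) -> C) (a b : bool) (x y : X) : C :=
  s (proj x a *t proj y b).

Definition synchronous (s : 'M[C]_(d * d) -> C) : Prop :=
  forall (x : X) (a b : bool), a != b -> corr s a b x x = 0.

End Defs.

(* Main.v *)
Require Import Defs.
From HB Require Import structures.
From mathcomp Require Import all_boot all_order all_algebra.
From mathcomp Require Import complex mxtens.
From mathcomp Require Import reals.
From mathcomp Require Import ring lra.
Import Order.TTheory GRing.Theory Num.Theory.
Local Open Scope ring_scope.
Set Implicit Arguments. Unset Strict Implicit. Unset Printing Implicit Defensive.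

Section Scal.
Variable R : realType.
Local Notation C := R[i].
Local Notation rc t := ((t%:C)%C : C).

Lemma L0 (p g : C) : 0 <= g ->
  (forall t : R, 0 <= rc t * p + (rc t)^+2 * g) -> p = 0.
Proof.
case: p => a b; case: g => g h => hg H.
move: hg; rewrite lecE /= => /andP[/eqP h0 g0]; subst h.
have Ht t : t * b = 0 /\ 0 <= t * a + t^+2 * g.
  move: (H t); rewrite lecE /= => /andP[/eqP e1 e2]; split.
    by rewrite -e1; ring.
  by move: e2; congr (_ <= _); ring.
have b0 : b = 0 by have [+ _] := Ht 1; rewrite mul1r.
pose k := (g + 1)^-1.
have hk : k * (g + 1) = 1 by rewrite mulVf // gt_eqF // ltr_wpDl.
have kp : 0 < k by rewrite invr_gt0 ltr_wpDl.
have [_ e] := Ht (- a * k).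
have a0 : a = 0.
  have : 0 <= - (a * k) ^+ 2.
    have E : - a * k * a + (- a * k) ^+ 2 * g
       = - (a * k) ^+ 2 + a ^+ 2 * k * (k * (g + 1) - 1) by ring.
    by move: e; rewrite E hk subrr mulr0 addr0.
  rewrite oppr_ge0 => h1.
  have : (a * k) ^+ 2 = 0 by apply/eqP; rewrite eq_le h1 sqr_ge0.
  by move/eqP; rewrite sqrf_eq0 mulf_eq0 (gt_eqF kp) orbF => /eqP.
by apply/eqP; rewrite eq_complex /= a0 b0 eqxx.
Qed.

Lemma rc_real (t : R) : rc t \is Num.real.
Proof. by rewrite realE !lecE /= eqxx /= le_total. Qed.

Lemma CS0 (al be ga : C) : 0 <= ga ->
  (forall mu : C, 0 <= mu * al + mu^* * be + mu * mu^* * ga) -> al = 0 /\ be = 0.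
Proof.
move=> g0 H.
have e1 : al + be = 0.
  apply: (L0 g0) => t; move: (H (rc t)); rewrite conj_Creal ?rc_real //.
  by congr (_ <= _); ring.
have e2 : 'i * (al - be) = 0.
  apply: (L0 g0) => t; move: (H ('i * rc t)).
  rewrite rmorphM /= conjCi conj_Creal ?rc_real //.
  congr (_ <= _); rewrite -[X in _ = X]addr0 -[in RHS](addrN ((rc t)^+2 * ga)).
  have -> : (rc t)^+2 * ga = - ('i ^+ 2) * (rc t)^+2 * ga by rewrite sqrCi opprK mul1r.
  ring.
move: e2 => /eqP; rewrite mulf_eq0 (negbTE (neq0Ci _)) /= subr_eq0 => /eqP e2.
move: e1; rewrite e2 -mulr2n -mulr_natr => /eqP; rewrite mulf_eq0 pnatr_eq0 orbF => /eqP ->.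
by [].
Qed.

Lemma adjmxE m n (A : 'M[C]_(m, n)) i j : adjmx A i j = (A j i)^*.
Proof. by rewrite !mxE. Qed.

Lemma adjmxM m n p (A : 'M[C]_(m, n)) (B : 'M[C]_(n, p)) :
  adjmx (A *m B) = adjmx B *m adjmx A.
Proof. by rewrite /adjmx map_mxM trmx_mul. Qed.

Lemma adjmxD m n (A B : 'M[C]_(m, n)) : adjmx (A + B) = adjmx A + adjmx B.
Proof. by rewrite /adjmx map_mxD linearD. Qed.

Lemma adjmxZ m n (k : C) (A : 'M[C]_(m, n)) : adjmx (k *: A) = k^* *: adjmx A.
Proof. by rewrite /adjmx map_mxZ linearZ. Qed.

Lemma adjmxN m n (A : 'M[C]_(m, n)) : adjmx (- A) = - adjmx A.
Proof. by rewrite /adjmx map_mxN linearN. Qed.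

Lemma adjmx1 n : adjmx (1%:M : 'M[C]_n) = 1%:M.
Proof. by apply/matrixP => i j; rewrite !mxE rmorph_nat eq_sym. Qed.

Lemma adjmxK m n (A : 'M[C]_(m, n)) : adjmx (adjmx A) = A.
Proof. by apply/matrixP => i j; rewrite !mxE conjCK. Qed.

Lemma adjmx_tens m n p q (A : 'M[C]_(m, n)) (B : 'M[C]_(p, q)) :
  adjmx (A *t B) = adjmx A *t adjmx B.
Proof. by rewrite /adjmx map_mxT trmx_tens. Qed.

Lemma tensmxDl m n p q (A B : 'M[C]_(m, n)) (D : 'M[C]_(p, q)) :
  (A + B) *t D = A *t D + B *t D.
Proof. by apply/matrixP => i j; rewrite !mxE mulrDl. Qed.

Lemma tensmxDr m n p q (A : 'M[C]_(m, n)) (B D : 'M[C]_(p, q)) :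
  A *t (B + D) = A *t B + A *t D.
Proof. by apply/matrixP => i j; rewrite !mxE mulrDr. Qed.

Lemma tensmxZl m n p q k (A : 'M[C]_(m, n)) (D : 'M[C]_(p, q)) :
  (k *: A) *t D = k *: (A *t D).
Proof. by apply/matrixP => i j; rewrite !mxE mulrA. Qed.

Lemma tensmxZr m n p q k (A : 'M[C]_(m, n)) (D : 'M[C]_(p, q)) :
  A *t (k *: D) = k *: (A *t D).
Proof. by apply/matrixP => i j; rewrite !mxE mulrCA. Qed.

Lemma tens11 m n : (1%:M : 'M[C]_m) *t (1%:M : 'M[C]_n) = 1%:M.
Proof.
apply/matrixP => i j.
case: (mxtens_indexP i) => i0 i1; case: (mxtens_indexP j) => j0 j1.
rewrite tensmxE !mxE -natrM mulnb; congr ((_ : bool)%:R).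
apply/andP/eqP => [[/eqP -> /eqP ->] //|/(congr1 (@mxtens_unindex _ _))].
by rewrite !mxtens_indexK => -[-> ->].
Qed.

Lemma psd_gram n (B : 'M[C]_n) : psdmx (adjmx B *m B).
Proof.
split; first by rewrite adjmxM adjmxK.
move=> v; rewrite mulmxA -adjmxM -mulmxA !mxE; apply: sumr_ge0 => k _.
by rewrite !mxE mulrC mul_conjC_ge0.
Qed.

Lemma psd_scale n (k : C) (B : 'M[C]_n) : 0 <= k -> psdmx B -> psdmx (k *: B).
Proof.
move=> k0 [h1 h2]; split; first by rewrite adjmxZ h1 conj_Creal // ger0_real.
by move=> v; rewrite -scalemxAr -scalemxAl mxE mulr_ge0.
Qed.

Section St.
Variable n : nat.
Variable V : 'M[C]_(n * n) -> Prop.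
Variable s : 'M[C]_(n * n) -> C.
Hypothesis hs : state_on V s.
Hypothesis V0 : V 0.
Hypothesis VD : forall M N, V M -> V N -> V (M + N).

Lemma st0 : s 0 = 0.
Proof.
have [h _ _] := hs; have := h 1 0 0 V0 V0.
by rewrite scale1r addr0 mul1r => /eqP; rewrite -subr_eq0 opprD addrA subrr sub0r oppr_eq0 => /eqP.
Qed.

Lemma stD M N : V M -> V N -> s (M + N) = s M + s N.
Proof. by have [h _ _] := hs => hM hN; rewrite -[M]scale1r h // mul1r scale1r. Qed.

Lemma stZ k M : V M -> s (k *: M) = k * s M.
Proof. by have [h _ _] := hs => hM; rewrite -[_ *: M]addr0 h // st0 addr0. Qed.

Lemma stsum (I : finType) (F : I -> 'M[C]_(n * n)) :
  (forall i, V (F i)) -> s (\sum_i F i) = \sum_i s (F i).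
Proof.
move=> hF.
suff : V (\sum_i F i) /\ s (\sum_i F i) = \sum_i s (F i) by case.
elim/big_rec2: _ => [|i y1 y2 _ [hy e]]; first by rewrite st0.
by split; [apply: VD | rewrite stD // e].
Qed.
End St.

Section Span.
Variables (I : finType) (m : nat) (B : I -> I -> 'M[C]_m).
Definition span2 (M : 'M[C]_m) :=
  exists c : I -> I -> C, M = \sum_i \sum_j c i j *: B i j.

Lemma span0 : span2 0.
Proof. by exists (fun _ _ => 0); rewrite big1 // => i _; rewrite big1 // => j _; rewrite scale0r. Qed.

Lemma spanD M N : span2 M -> span2 N -> span2 (M + N).
Proof.
move=> [c1 ->] [c2 ->]; exists (fun i j => c1 i j + c2 i j).
rewrite -big_split; apply: eq_bigr => i _; rewrite -big_split.
by apply: eq_bigr => j _; rewrite scalerDl.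
Qed.

Lemma spanZ k M : span2 M -> span2 (k *: M).
Proof.
move=> [c ->]; exists (fun i j => k * c i j).
rewrite scaler_sumr; apply: eq_bigr => i _; rewrite scaler_sumr.
by apply: eq_bigr => j _; rewrite scalerA.
Qed.

Lemma spanB i j : span2 (B i j).
Proof.
exists (fun i' j' => ((i' == i) && (j' == j))%:R).
rewrite (bigD1 i) //= (bigD1 j) //= !eqxx scale1r big1 ?addr0.
  rewrite big1 ?addr0 // => i' /negbTE ->; rewrite big1 // => j' _.
  by rewrite scale0r.
by move=> j' /negbTE ->; rewrite andbF scale0r.
Qed.

Lemma spansum (J : finType) (F : J -> 'M[C]_m) :
  (forall k, span2 (F k)) -> span2 (\sum_k F k).
Proof. by move=> h; elim/big_ind: _ => //; [apply: span0 | apply: spanD]. Qed.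

Lemma span_ind (P : 'M[C]_m -> Prop) M :
  span2 M -> P 0 -> (forall M N, P M -> P N -> P (M + N)) ->
  (forall k i j, P (k *: B i j)) -> P M.
Proof.
move=> [c ->] P0 PD PB; elim/big_ind: _ => // i _.
by elim/big_ind: _ => // j _.
Qed.
End Span.

Section Cl.
Variable X : finType.
Variable d : nat.
Variable u : X -> 'M[C]_d.
Hypothesis hu : clifford_rep u.

Lemma u_sa x : adjmx (u x) = u x. Proof. by case: hu. Qed.
Lemma u_sq x : u x *m u x = 1%:M. Proof. by case: hu. Qed.
Lemma u_ac x y : x != y -> u x *m u y = - (u y *m u x).
Proof. by case: hu => _ _ h /h /eqP; rewrite addr_eq0 => /eqP. Qed.

Definition prodl (l : seq X) := foldr (fun x M => u x *m M) 1%:M l.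

Lemma NF (l : seq X) x (p q : pred X) : uniq l -> x \in l ->
  (forall y, y != x -> p y = q y) -> p x != q x ->
  exists e : C, u x *m prodl (filter p l) = e *: prodl (filter q l).
Proof.
elim: l => [//|y l IH] /= /andP[yl ul] xin hpq hx.
case: (eqVneq x y) => [exy|nxy].
  subst y.
  have ef : filter p l = filter q l.
    apply: eq_in_filter => z zl; apply: hpq.
    by apply: contraNneq yl => <-.
  exists 1; rewrite scale1r ef.
  by case: (p x) (q x) hx => [] [] //= _; rewrite mulmxA u_sq mul1mx.
move: xin; rewrite in_cons (negbTE nxy) /= => xin.
have [e He] := IH ul xin hpq hx.
rewrite -(hpq y) 1?eq_sym //.
case: (p y) => /=; last by exists e.
by exists (- e); rewrite mulmxA u_ac // mulNmx -mulmxA He scalemxAr scaleNr mulmxN.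
Qed.

Definition mono (S : {set X}) := prodl [seq y <- Finite.enum X | y \in S].
Lemma monoE S : monomial u S = mono S. Proof. by []. Qed.

Lemma NFS x (S : {set X}) : exists T : {set X}, exists e : C,
  u x *m mono S = e *: mono T.
Proof.
exists [set y | if y == x then x \notin S else y \in S].
apply: NF; first by rewrite -enumT enum_uniq.
  by rewrite -enumT mem_enum.
  by move=> y /negbTE yx; rewrite inE yx.
by rewrite inE eqxx; case: (x \in S).
Qed.


Definition CC (M : 'M[C]_(d * d)) := span2 (fun S T => mono S *t mono T) M.
Lemma CCE M : in_CC u M <-> CC M. Proof. by []. Qed.

Lemma CC_ind (P : 'M[C]_(d * d) -> Prop) M :
  CC M -> P 0 -> (forall M N, P M -> P N -> P (M + N)) ->
  (forall k S T, P (k *: (mono S *t mono T))) -> P M.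
Proof. exact: (@span_ind _ _ (fun S T => mono S *t mono T) P). Qed.

Lemma CC_B S T : CC (mono S *t mono T).
Proof. exact: (spanB (fun S T => mono S *t mono T)). Qed.
Lemma CC_0 : CC 0. Proof. exact: span0. Qed.
Lemma CC_D M N : CC M -> CC N -> CC (M + N). Proof. exact: spanD. Qed.
Lemma CC_Z k M : CC M -> CC (k *: M). Proof. exact: spanZ. Qed.

Lemma tens_l (A B : 'M[C]_d) : (A *m B) *t 1%:M = (A *t 1%:M) *m (B *t (1%:M : 'M[C]_d)).
Proof. by rewrite tensmx_mul mul1mx. Qed.
Lemma tens_r (A B : 'M[C]_d) : 1%:M *t (A *m B) = (1%:M *t A) *m ((1%:M : 'M[C]_d) *t B).
Proof. by rewrite tensmx_mul mul1mx. Qed.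

Lemma CC_lmul (L : 'M[C]_(d * d)) M :
  (forall S T, CC (L *m (mono S *t mono T))) -> CC M -> CC (L *m M).
Proof.
move=> h hM; apply: (@CC_ind (fun M => CC (L *m M)) M hM).
- by rewrite mulmx0; apply: CC_0.
- by move=> M1 M2 h1 h2; rewrite mulmxDr; apply: CC_D.
- by move=> k S T; rewrite -scalemxAr; apply: CC_Z.
Qed.

Lemma CC_lu x M : CC M -> CC ((u x *t 1%:M) *m M).
Proof.
apply: CC_lmul => S T; rewrite tensmx_mul mul1mx.
have [S' [e ->]] := NFS x S; rewrite tensmxZl; apply: CC_Z.
exact: CC_B.
Qed.

Lemma CC_ru x M : CC M -> CC ((1%:M *t u x) *m M).
Proof.
apply: CC_lmul => S T; rewrite tensmx_mul mul1mx.
have [T' [e ->]] := NFS x T; rewrite tensmxZr; apply: CC_Z.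
exact: CC_B.
Qed.

Lemma CC_lprod l M : CC M -> CC ((prodl l *t 1%:M) *m M).
Proof.
elim: l M => [|x l IH] M hM /=; first by rewrite tens11 mul1mx.
by rewrite tens_l -mulmxA; apply: CC_lu; apply: IH.
Qed.

Lemma CC_rprod l M : CC M -> CC ((1%:M *t prodl l) *m M).
Proof.
elim: l M => [|x l IH] M hM /=; first by rewrite tens11 mul1mx.
by rewrite tens_r -mulmxA; apply: CC_ru; apply: IH.
Qed.

Lemma CC_ladj l M : CC M -> CC ((adjmx (prodl l) *t 1%:M) *m M).
Proof.
elim: l M => [|x l IH] M hM /=; first by rewrite adjmx1 tens11 mul1mx.
by rewrite adjmxM u_sa tens_l -mulmxA; apply: IH; apply: CC_lu.
Qed.

Lemma CC_radj l M : CC M -> CC ((1%:M *t adjmx (prodl l)) *m M).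
Proof.
elim: l M => [|x l IH] M hM /=; first by rewrite adjmx1 tens11 mul1mx.
by rewrite adjmxM u_sa tens_r -mulmxA; apply: IH; apply: CC_ru.
Qed.

Lemma mono0 : mono set0 = 1%:M.
Proof. by rewrite -monoE /monomial enum_set0. Qed.

Lemma mono1 x : mono [set x] = u x.
Proof. by rewrite -monoE /monomial enum_set1 /= mulmx1. Qed.

Lemma CC_1 : CC 1%:M.
Proof.
rewrite -tens11 -mono0; exact: CC_B.
Qed.

Lemma CC_mul M N : CC M -> CC N -> CC (M *m N).
Proof.
move=> hM hN; apply: (@CC_ind (fun M => CC (M *m N)) M hM).
- by rewrite mul0mx; apply: CC_0.
- by move=> M1 M2 h1 h2; rewrite mulmxDl; apply: CC_D.
move=> k S T; rewrite -scalemxAl; apply: CC_Z.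
rewrite -[mono S]mulmx1 -[mono T]mul1mx -tensmx_mul -mulmxA.
by apply: CC_lprod; apply: CC_rprod.
Qed.

Lemma CC_adj M : CC M -> CC (adjmx M).
Proof.
move=> hM; apply: (@CC_ind (fun M => CC (adjmx M)) M hM).
- by rewrite /adjmx map_mx0 trmx0; apply: CC_0.
- by move=> M1 M2 h1 h2; rewrite adjmxD; apply: CC_D.
move=> k S T; rewrite adjmxZ; apply: CC_Z.
rewrite adjmx_tens -[adjmx (mono S)]mulmx1 -[adjmx (mono T)]mul1mx -tensmx_mul.
apply: CC_ladj; rewrite -[1%:M *t _]mulmx1.
by apply: CC_radj; apply: CC_1.
Qed.

Lemma CC_N M : CC M -> CC (- M).
Proof. by move=> h; rewrite -scaleN1r; apply: CC_Z. Qed.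

Ltac sCC := repeat first [ assumption | apply: CC_1 | apply: CC_D | apply: CC_N | apply: CC_Z
  | apply: CC_mul | apply: CC_adj ].

Lemma lin4 phi (hphi : state_on CC phi) A1 A2 A3 A4 (k2 k3 k4 : C) :
  CC A1 -> CC A2 -> CC A3 -> CC A4 ->
  phi (A1 + k2 *: A2 + k3 *: A3 + k4 *: A4) =
  phi A1 + k2 * phi A2 + k3 * phi A3 + k4 * phi A4.
Proof. by move=> h1 h2 h3 h4; rewrite !(stD hphi) ?(stZ hphi CC_0) //; sCC. Qed.

Section Rigid.
Variable phi : 'M[C]_(d * d) -> C.
Hypothesis hphi : state_on CC phi.
Variable w : 'M[C]_(d * d).
Hypothesis hwC : CC w.
Hypothesis hwa : adjmx w = w.
Hypothesis hww : w *m w = 1%:M.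
Hypothesis hw1 : phi w = 1.

Let pD := stD hphi.
Let pZ := stZ hphi CC_0.

Let P : 'M[C]_(d * d) := (2^-1 : C) *: (1%:M - w).

Let CCP : CC P.
Proof. by rewrite /P; sCC. Qed.

Let Pa : adjmx P = P.
Proof.
by rewrite /P adjmxZ adjmxD adjmxN adjmx1 hwa conj_Creal // rpredV rpred_nat.
Qed.

Let PP : P *m P = P.
Proof.
have E : (1%:M - w) *m (1%:M - w) = (2%:R : C) *: (1%:M - w).
  by rewrite mulmxBl !mulmxBr hww !mul1mx mulmx1 opprB scaler_nat mulr2n.
rewrite /P; rewrite -(scalemxAl (2^-1 : C) (1%:M - w)) -scalemxAr E !scalerA; congr (_ *: _).
by rewrite -mulrA mulVf ?mulr1 // pnatr_eq0.
Qed.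

Let phiP : phi P = 0.
Proof.
have [_ h1 _] := hphi.
rewrite /P pZ; last by apply: CC_D; [apply: CC_1 | rewrite -scaleN1r; apply: CC_Z].
by rewrite -scaleN1r pD ?pZ ?h1 ?hw1 ?mulN1r ?subrr ?mulr0 //; [apply: CC_1 | apply: CC_Z].
Qed.

Let rig B : CC B -> phi (P *m B) = 0 /\ phi (adjmx B *m P) = 0.
Proof.
move=> hB; have [_ _ hpos] := hphi.
have hBa := CC_adj hB.
apply: (@CS0 (phi (P *m B)) (phi (adjmx B *m P)) (phi (adjmx B *m B))).
  by apply: hpos; [apply: CC_mul | apply: psd_gram].
move=> mu.
have E : adjmx (P + mu *: B) *m (P + mu *: B) =
   P + mu *: (P *m B) + mu^* *: (adjmx B *m P) + (mu * mu^*) *: (adjmx B *m B).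
  rewrite adjmxD adjmxZ Pa mulmxDl !mulmxDr PP -(scalemxAr mu P B).
  rewrite -(scalemxAl mu^* (adjmx B) P) -(scalemxAl mu^* (adjmx B) (mu *: B)).
  by rewrite -(scalemxAr mu (adjmx B) B) scalerA [mu^* * mu]mulrC !addrA.
have := hpos _ (CC_mul (CC_adj (CC_D CCP (CC_Z mu hB))) (CC_D CCP (CC_Z mu hB)))
  (psd_gram _).
have C1 : CC (P *m B) by sCC.
have C2 : CC (adjmx B *m P) by sCC.
have C3 : CC (adjmx B *m B) by sCC.
by rewrite E (lin4 hphi) // phiP add0r.
Qed.

Lemma rigL B : CC B -> phi (w *m B) = phi B.
Proof.
move=> hB; have [h _] := rig hB.
have E : P *m B = (2^-1 : C) *: (B + (-1) *: (w *m B)).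
  by rewrite /P -(scalemxAl (2^-1 : C) (1%:M - w) B) mulmxBl mul1mx scaleN1r.
move: h; rewrite E pZ; last by sCC.
rewrite pD ?pZ; try by sCC.
move/eqP; rewrite mulf_eq0 invr_eq0 pnatr_eq0 /= mulN1r subr_eq0.
by move/eqP.
Qed.

Lemma rigR B : CC B -> phi (B *m w) = phi B.
Proof.
move=> hB; have [_ h] := rig (CC_adj hB).
have E : B *m P = (2^-1 : C) *: (B + (-1) *: (B *m w)).
  by rewrite /P -(scalemxAr (2^-1 : C) B (1%:M - w)) mulmxBr mulmx1 scaleN1r.
move: h; rewrite adjmxK E pZ; last by sCC.
rewrite pD ?pZ; try by sCC.
move/eqP; rewrite mulf_eq0 invr_eq0 pnatr_eq0 /= mulN1r subr_eq0.
by move/eqP.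
Qed.
End Rigid.

Lemma conj_sign l x : uniq l ->
  u x *m prodl l *m u x = ((-1) ^+ (size l - (x \in l))) *: prodl l.
Proof.
elim: l => [|y l IH] /=; first by rewrite mulmx1 u_sq scale1r.
move=> /andP[yl ul]; rewrite in_cons.
have IH' : prodl l *m u x = ((-1) ^+ (size l - (x \in l))) *: (u x *m prodl l).
  by rewrite -[prodl l *m u x]mul1mx -(u_sq x) -mulmxA [u x *m (prodl l *m u x)]mulmxA IH // scalemxAr.
case: (eqVneq x y) => [exy|nxy] /=.
  subst y; rewrite subSS subn0 mulmxA u_sq mul1mx IH'.
  by rewrite (negbTE yl) subn0.
rewrite mulmxA u_ac // !mulNmx -!mulmxA [u x *m (prodl l *m u x)]mulmxA IH //.
rewrite -scalemxAr -scaleN1r scalerA -exprS.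
case xl: (x \in l) => /=; last by rewrite !subn0.
have : (0 < size l)%N by case: (l) xl.
by case: (size l) => // k _; rewrite subn1 /= subSS subn0.
Qed.

Definition w x := u x *t u x.
Lemma w_CC x : CC (w x).
Proof. by rewrite /w -mono1; apply: CC_B. Qed.
Lemma w_adj x : adjmx (w x) = w x.
Proof. by rewrite /w adjmx_tens u_sa. Qed.
Lemma w_sq x : w x *m w x = 1%:M.
Proof. by rewrite /w tensmx_mul u_sq tens11. Qed.
Lemma w_conj x (A B : 'M[C]_d) :
  w x *m (A *t B) *m w x = (u x *m A *m u x) *t (u x *m B *m u x).
Proof. by rewrite /w !tensmx_mul. Qed.

Lemma oddsig x (S : {set X}) : odd (#|S| - (x \in S)) = odd #|S| (+) (x \in S).
Proof.
case xS: (x \in S); last by rewrite subn0 addbF.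
have : (0 < #|S|)%N by apply/card_gt0P; exists x.
by case: #|S| => // k _; rewrite subn1 /= addbT negbK.
Qed.

Lemma mono_sign x S :
  u x *m mono S *m u x = ((-1) ^+ (odd #|S| (+) (x \in S))) *: mono S.
Proof.
have := conj_sign x (enum_uniq (mem S)).
by rewrite -cardE mem_enum -signr_odd oddsig.
Qed.

Section Uniq.
Variable phi : 'M[C]_(d * d) -> C.
Hypothesis hphi : state_on CC phi.
Hypothesis hw : forall x, phi (w x) = 1.

Lemma phi_inv x M : CC M -> phi (w x *m M *m w x) = phi M.
Proof.
move=> hM; rewrite -mulmxA (rigL hphi (w_CC x) (w_adj x) (w_sq x) (hw x)).
  exact: (rigR hphi (w_CC x) (w_adj x) (w_sq x) (hw x)).
by apply: CC_mul => //; apply: w_CC.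
Qed.

Lemma phi_prod l : phi (prodl l *t prodl l) = 1.
Proof.
elim: l => [|x l IH] /=; first by rewrite tens11; case: hphi.
have -> : (u x *m prodl l) *t (u x *m prodl l) = w x *m (prodl l *t prodl l).
  by rewrite /w tensmx_mul.
rewrite (rigL hphi (w_CC x) (w_adj x) (w_sq x) (hw x)) //.
have -> : prodl l *t prodl l = (prodl l *t 1%:M) *m ((1%:M *t prodl l) *m 1%:M).
  by rewrite mulmx1 tensmx_mul mulmx1 mul1mx.
by apply: CC_lprod; apply: CC_rprod; apply: CC_1.
Qed.

Lemma phi_B (hX : ~~ odd #|X|) S T : phi (mono S *t mono T) = (S == T)%:R.
Proof.
case: (eqVneq S T) => [<-|nST]; first exact: phi_prod.
suff [x hx] : exists x, odd #|S| (+) (x \in S) (+) (odd #|T| (+) (x \in T)).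
  have := phi_inv x (CC_B S T); rewrite w_conj !mono_sign tensmxZl tensmxZr scalerA.
  rewrite -exprD -signr_odd oddD !oddb hx expr1 scaleN1r.
  rewrite -scaleN1r (stZ hphi CC_0) ?mulN1r; last exact: CC_B.
  move/eqP; rewrite eq_sym -addr_eq0 -mulr2n mulrn_eq0 /=.
  by move/eqP ->.
have [z hz] : exists z, (z \in S) != (z \in T).
  apply/existsP; apply: contraNT nST; rewrite negb_exists => /forallP h.
  by apply/eqP/setP => z; apply/eqP; move: (h z); rewrite negbK.
case: (boolP (odd #|S| == odd #|T|)) => [/eqP e|ne].
  exists z; rewrite e; move: hz.
  by case: (z \in S); case: (z \in T); case: (odd #|T|).
case: (boolP [exists x, (x \in S) == (x \in T)]) => [/existsP [x /eqP hx]|].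
  exists x; rewrite hx; move: ne.
  by case: (x \in T); case: (odd #|T|); case: (odd #|S|).
rewrite negb_exists => /forallP h.
have eT : T = ~: S.
  by apply/setP => x; rewrite inE; move: (h x); case: (x \in S); case: (x \in T).
move: ne; rewrite eT; have -> : #|~: S| = (#|X| - #|S|)%N by rewrite -(cardsC S) addKn.
by rewrite oddB ?max_card // (negbTE hX) /=; case: (odd _).
Qed.
End Uniq.

Lemma tensNN (A B : 'M[C]_d) : (- A) *t (- B) = A *t B.
Proof. by apply/matrixP => i j; rewrite !mxE mulrNN. Qed.
Lemma tensNl (A B : 'M[C]_d) : (- A) *t B = - (A *t B).
Proof. by apply/matrixP => i j; rewrite !mxE mulNr. Qed.
Lemma tensNr (A B : 'M[C]_d) : A *t (- B) = - (A *t B).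
Proof. by apply/matrixP => i j; rewrite !mxE mulrN. Qed.

Lemma w_comm x y : w x *m w y = w y *m w x.
Proof.
case: (eqVneq x y) => [->//|nxy].
by rewrite /w !tensmx_mul u_ac // tensNN.
Qed.

Definition Pr x : 'M[C]_(d * d) := (2^-1 : C) *: (1%:M + w x).
Definition Qp (l : seq X) := foldr (fun x M => Pr x *m M) 1%:M l.

Lemma w_Pr x : w x *m Pr x = Pr x.
Proof. by rewrite /Pr -scalemxAr mulmxDr mulmx1 w_sq addrC. Qed.

Lemma comm_Pr (A : 'M[C]_(d * d)) x : A *m w x = w x *m A -> A *m Pr x = Pr x *m A.
Proof.
by move=> h; rewrite /Pr -scalemxAr -scalemxAl mulmxDr mulmxDl mulmx1 mul1mx h.
Qed.

Lemma comm_Qp (A : 'M[C]_(d * d)) l : (forall x, x \in l -> A *m w x = w x *m A) ->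
  A *m Qp l = Qp l *m A.
Proof.
elim: l => [|x l IH] h /=; first by rewrite mulmx1 mul1mx.
rewrite mulmxA comm_Pr ?h ?mem_head // -!mulmxA IH // => y yl.
by apply: h; rewrite in_cons yl orbT.
Qed.

Lemma w_Qp x l : x \in l -> w x *m Qp l = Qp l.
Proof.
elim: l => [//|y l IH]; rewrite in_cons /= => /orP[/eqP ->|xl].
  by rewrite mulmxA w_Pr.
by rewrite mulmxA (comm_Pr (w_comm x y)) -mulmxA IH.
Qed.

Lemma prodl_unit l : adjmx (prodl l) *m prodl l = 1%:M.
Proof.
elim: l => [|x l IH] /=; first by rewrite adjmx1 mulmx1.
by rewrite adjmxM u_sa -mulmxA [u x *m (u x *m _)]mulmxA u_sq mul1mx.
Qed.

Lemma prodl_comm l x : uniq l ->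
  prodl l *m u x = ((-1) ^+ (size l - (x \in l))) *: (u x *m prodl l).
Proof.
move=> ul.
by rewrite -[prodl l *m u x]mul1mx -(u_sq x) -mulmxA [u x *m (prodl l *m u x)]mulmxA conj_sign // scalemxAr.
Qed.

Lemma one_neq0 (hd : (0 < d)%N) : (1%:M : 'M[C]_(d * d)) != 0.
Proof.
have i : 'I_(d * d) by exists 0%N; rewrite muln_gt0 hd.
by apply/eqP => /matrixP/(_ i i); rewrite !mxE eqxx /= => /eqP; rewrite oner_eq0.
Qed.

Lemma Pr_anti (a : 'M[C]_(d * d)) z : a *m w z = - (w z *m a) ->
  Pr z *m a + a *m Pr z = a.
Proof.
move=> h; rewrite /Pr -scalemxAl -scalemxAr mulmxDl mulmxDr mul1mx mulmx1 h.
move: (w z *m a) => wa; apply/matrixP => i j; rewrite !mxE.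
by field.
Qed.

Lemma exists_out (l : seq X) : uniq l -> (size l < #|X|)%N -> exists y, y \notin l.
Proof.
move=> ul hs.
have : (0 < #|~: [set y in l]|)%N.
  by rewrite cardsCs setCK cardsE (card_uniqP ul) subn_gt0.
by case/card_gt0P => y; rewrite !inE => ?; exists y.
Qed.

Lemma Qp_neq0 (hX : ~~ odd #|X|) (hd : (0 < d)%N) l : uniq l -> Qp l != 0.
Proof.
elim: l => [|z l IH] /=; first by move=> _; apply: one_neq0.
move=> /andP[zl ul]; have Ql := IH ul.
have [l' [ul' ol' sl' zl']] : exists l', [/\ uniq l', odd (size l'),
    {subset l <= l'} & z \notin l'].
  case ol: (odd (size l)); first by exists l; split; rewrite ?ol.
  have u2 : uniq (z :: l) by rewrite /= zl.
  have hs : (size (z :: l) < #|X|)%N.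
    have := max_card (mem (z :: l)); rewrite (card_uniqP u2) leq_eqVlt.
    by case/orP => // /eqP e; move: hX; rewrite -e /= ol.
  have [y hy] := exists_out u2 hs.
  move: hy; rewrite in_cons negb_or => /andP[yz yl].
  exists (y :: l); split => //=; first by rewrite yl.
  - by rewrite ol.
  - by move=> x xl; rewrite in_cons xl orbT.
  by rewrite in_cons negb_or eq_sym yz.
pose b := prodl l'; pose a : 'M[C]_(d * d) := b *t 1%:M.
have bc x : x \in l' -> b *m u x = u x *m b.
  move=> xl; rewrite /b prodl_comm // xl.
  case: (size l') ol' => // k /= ok.
  by rewrite subn1 /= -signr_odd (negbTE ok) expr0 scale1r.
have bz : b *m u z = - (u z *m b).
  by rewrite /b prodl_comm // (negbTE zl') subn0 -signr_odd ol' expr1 scaleN1r.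
have aw x : x \in l -> a *m w x = w x *m a.
  by move=> xl; rewrite /a /w !tensmx_mul bc ?sl' // mul1mx mulmx1.
have az : a *m w z = - (w z *m a).
  by rewrite /a /w !tensmx_mul bz mul1mx mulmx1 tensNl.
apply/negP => /eqP h0.
have aQ : a *m Qp l = 0.
  rewrite -{1}(Pr_anti az) mulmxDl -mulmxA (comm_Qp aw) mulmxA h0 mul0mx add0r.
  by rewrite -mulmxA h0 mulmx0.
move/eqP: Ql; apply.
have -> : Qp l = (adjmx b *t 1%:M) *m a *m Qp l.
  by rewrite /a tensmx_mul prodl_unit mul1mx tens11 mul1mx.
by rewrite -mulmxA aQ mulmx0.
Qed.

Section Exist.
Hypothesis hX : ~~ odd #|X|.
Hypothesis hd : (0 < d)%N.

Let Q := Qp (enum X).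
Let hQ : Q != 0 := Qp_neq0 hX hd (enum_uniq _).
Let wQ x : w x *m Q = Q.
Proof. by apply: w_Qp; rewrite mem_enum. Qed.

Let hij : exists ij : 'I_(d * d) * 'I_(d * d), Q ij.1 ij.2 != 0.
Proof.
case: (pickP (fun ij : 'I_(d * d) * 'I_(d * d) => Q ij.1 ij.2 != 0)) => [ij h|h].
  by exists ij.
have Q0 : Q = 0.
  by apply/matrixP => i j; move: (h (i, j)); rewrite /= mxE => /negbFE/eqP.
by move: hQ; rewrite Q0 eqxx.
Qed.

Let ij := xchoose hij.
Let hij' : Q ij.1 ij.2 != 0 := xchooseP hij.
Let c := col ij.2 Q.
Let wc x : w x *m c = c.
Proof. by rewrite /c !colE mulmxA wQ. Qed.
Let Nn := (adjmx c *m c) 0 0.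
Let Nn_gt0 : 0 < Nn.
Proof.
have ge0 k : 0 <= (adjmx c) 0 k * c k 0 by rewrite !mxE mulrC mul_conjC_ge0.
rewrite lt_def /Nn mxE sumr_ge0 // andbT; apply/eqP => h0.
have := psumr_eq0P (fun k _ => ge0 k) h0 (i := ij.1) isT.
rewrite !mxE mulrC => /eqP; rewrite mulf_eq0 conjC_eq0 orbb.
by rewrite (negbTE hij').
Qed.

Definition phi0 (M : 'M[C]_(d * d)) : C := (adjmx c *m M *m c) 0 0 / Nn.

Lemma phi0_state : state_on (fun _ => True) phi0.
Proof.
split.
- move=> k M N _ _; rewrite /phi0 mulmxDr mulmxDl -scalemxAr -scalemxAl !mxE.
  by rewrite mulrDl mulrA.
- by rewrite /phi0 mulmx1 divff // gt_eqF.
- move=> M _ [_ hM]; rewrite /phi0 divr_ge0 //; last exact: ltW.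
Qed.

Lemma phi0_w x : phi0 (w x) = 1.
Proof. by rewrite /phi0 -mulmxA wc divff // gt_eqF. Qed.

Lemma phi0_anti a x : a *m w x = - (w x *m a) -> phi0 a = 0.
Proof.
move=> h; rewrite /phi0.
have H : adjmx c *m w x = adjmx c by rewrite -w_adj -adjmxM wc.
have E1 : adjmx c *m a *m c = adjmx c *m (a *m w x) *m c.
  by rewrite !mulmxA -[adjmx c *m a *m w x *m c]mulmxA wc.
have E2 : adjmx c *m (w x *m a) *m c = adjmx c *m a *m c by rewrite mulmxA H.
have e : adjmx c *m a *m c = - (adjmx c *m a *m c).
  by rewrite {1}E1 h mulmxN mulNmx E2.
move: e; set Y := adjmx c *m a *m c => e.
have : Y 0 0 = - Y 0 0 by rewrite {1}e mxE.
move/eqP; rewrite -addr_eq0 -mulr2n mulrn_eq0 /= => /eqP ->.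
by rewrite mul0r.
Qed.
End Exist.

Lemma alg3 n (W A : 'M[C]_n) (x1 x2 x3 : C) :
  W *m W = 1%:M -> A *m A = 1%:M -> A *m W = - (W *m A) ->
  (x1 *: 1%:M + x2 *: W + x3 *: A) *m (x1 *: 1%:M + x2 *: W + x3 *: A) =
  (x1 ^+ 2 + x2 ^+ 2 + x3 ^+ 2) *: 1%:M + (2 * x1 * x2) *: W + (2 * x1 * x3) *: A.
Proof.
move=> hW hA hAW.
rewrite !mulmxDl !mulmxDr -!scalemxAl -!scalemxAr !scalerA.
rewrite !mul1mx !mulmx1 hW hA hAW.
move: (W *m A) => WA; apply/matrixP => i j; rewrite !mxE.
ring.
Qed.

Definition SS (M : 'M[C]_(d * d)) := span2 (fun i j => genS u i *t genS u j) M.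
Lemma SSE M : in_SS u M <-> SS M. Proof. by []. Qed.
Lemma SS_B i j : SS (genS u i *t genS u j).
Proof. exact: (spanB (fun i j => genS u i *t genS u j)). Qed.
Lemma SS_0 : SS 0. Proof. exact: span0. Qed.
Lemma SS_D M N : SS M -> SS N -> SS (M + N). Proof. exact: spanD. Qed.
Lemma SS_Z k M : SS M -> SS (k *: M). Proof. exact: spanZ. Qed.
Lemma SS_N M : SS M -> SS (- M). Proof. by move=> h; rewrite -scaleN1r; apply: SS_Z. Qed.
Lemma SS_11 : SS (1%:M *t 1%:M). Proof. exact: (SS_B None None). Qed.
Lemma SS_1 : SS 1%:M. Proof. by rewrite -tens11; apply: SS_11. Qed.
Lemma SS_u1 x : SS (u x *t 1%:M). Proof. exact: (SS_B (Some x) None). Qed.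
Lemma SS_1u x : SS (1%:M *t u x). Proof. exact: (SS_B None (Some x)). Qed.
Lemma SS_uu x y : SS (u x *t u y). Proof. exact: (SS_B (Some x) (Some y)). Qed.
Lemma SS_w x : SS (w x). Proof. exact: SS_uu. Qed.

Ltac sSS := repeat first [ assumption | apply: SS_1 | apply: SS_11 | apply: SS_u1
  | apply: SS_1u | apply: SS_uu | apply: SS_w | apply: SS_D | apply: SS_N | apply: SS_Z ].

Lemma psd_comb n (W A : 'M[C]_n) (x1 x2 x3 : C) :
  W *m W = 1%:M -> A *m A = 1%:M -> A *m W = - (W *m A) ->
  adjmx W = W -> adjmx A = A ->
  x1 \is Num.real -> x2 \is Num.real -> x3 \is Num.real -> 0 < x1 ->
  x1 ^+ 2 = x2 ^+ 2 + x3 ^+ 2 -> psdmx (x1 *: 1%:M + x2 *: W + x3 *: A).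
Proof.
move=> hW hA hAW aW aA r1 r2 r3 x1p hx.
set M := x1 *: 1%:M + x2 *: W + x3 *: A.
have aM : adjmx M = M.
  by rewrite /M !adjmxD !adjmxZ adjmx1 aW aA !conj_Creal.
have MM : M *m M = (2%:R * x1) *: M.
  have e1 : x1 ^+ 2 + x2 ^+ 2 + x3 ^+ 2 = 2%:R * x1 * x1 by rewrite -addrA -hx; ring.
  rewrite /M alg3 // e1; apply/matrixP => i j; rewrite !mxE; ring.
have -> : M = (2%:R * x1)^-1 *: (adjmx M *m M).
  by rewrite aM MM scalerA mulVf ?scale1r // mulf_neq0 ?pnatr_eq0 // gt_eqF.
apply: psd_scale; last exact: psd_gram.
by rewrite invr_ge0 mulr_ge0 ?ler0n // ltW.
Qed.

Lemma pyth (s : 'M[C]_(d * d) -> C) (hs : state_on SS s) (W A : 'M[C]_(d * d)) :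
  SS W -> SS A -> adjmx W = W -> adjmx A = A -> W *m W = 1%:M -> A *m A = 1%:M ->
  A *m W = - (W *m A) -> s W = 1 -> s A = 0.
Proof.
move=> sW sA aW aA hW hA hAW sW1.
have [_ s1 spos] := hs.
have p0 : - (2%:R * s A) = 0.
  apply: (@L0 _ 2%:R); first by rewrite ler0n.
  move=> t; have Tr : rc t \is Num.real by apply: rc_real.
  move: (rc t) Tr => T Tr.
  have r1 : 1 + T ^+ 2 \is Num.real by rewrite rpredD ?rpred1 ?rpredX.
  have r2 : - (1 - T ^+ 2) \is Num.real by rewrite rpredN rpredB ?rpred1 ?rpredX.
  have r3 : - (2%:R * T) \is Num.real by rewrite rpredN rpredM ?rpred_nat.
  have x1p : 0 < 1 + T ^+ 2 by rewrite ltr_wpDr // -realEsqr.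
  have hx : (1 + T ^+ 2) ^+ 2 = (- (1 - T ^+ 2)) ^+ 2 + (- (2%:R * T)) ^+ 2 by ring.
  have pM := psd_comb hW hA hAW aW aA r1 r2 r3 x1p hx.
  have SM : SS ((1 + T ^+ 2) *: 1%:M + (- (1 - T ^+ 2)) *: W + (- (2%:R * T)) *: A).
    by sSS.
  have := spos _ SM pM.
  rewrite !(stD hs) ?(stZ hs SS_0) ?s1 ?sW1; try by sSS.
  by congr (_ <= _); ring.
move/eqP: p0; rewrite oppr_eq0 mulf_eq0 pnatr_eq0 /=.
by move/eqP.
Qed.
Lemma gen_adj i : adjmx (genS u i) = genS u i.
Proof. by case: i => [x|] /=; rewrite ?u_sa ?adjmx1. Qed.
Lemma gen_sq i : genS u i *m genS u i = 1%:M.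
Proof. by case: i => [x|] /=; rewrite ?u_sq ?mulmx1. Qed.
Lemma genT_adj i j : adjmx (genS u i *t genS u j) = genS u i *t genS u j.
Proof. by rewrite adjmx_tens !gen_adj. Qed.
Lemma genT_sq i j : (genS u i *t genS u j) *m (genS u i *t genS u j) = 1%:M.
Proof. by rewrite tensmx_mul !gen_sq tens11. Qed.

Lemma exists_other (hX : ~~ odd #|X|) (x : X) : exists y, y != x.
Proof.
have : (0 < #|[set~ x]|)%N.
  rewrite cardsC1; have : (0 < #|X|)%N by apply/card_gt0P; exists x.
  by case: (#|X|) hX => [|[|k]].
by case/card_gt0P => y; rewrite !inE => ?; exists y.
Qed.

Lemma gen_anti (hX : ~~ odd #|X|) i j : i != j ->
  exists x, (genS u i *t genS u j) *m w x = - (w x *m (genS u i *t genS u j)).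
Proof.
case: i => [x|]; case: j => [y|] //= hij.
- exists x; rewrite /w !tensmx_mul u_sq u_ac; last by apply: contraNneq hij => ->.
  by rewrite tensNr.
- have [y hy] := exists_other hX x; exists y.
  by rewrite /w !tensmx_mul u_ac 1?eq_sym // mul1mx mulmx1 tensNl.
- have [x hx] := exists_other hX y; exists x.
  by rewrite /w !tensmx_mul u_ac 1?eq_sym // mul1mx mulmx1 tensNr.
Qed.

Lemma sync_w (s : 'M[C]_(d * d) -> C) (hs : state_on SS s) (hsync : synchronous u s) x :
  s (w x) = 1.
Proof.
have h1 := hsync x false true isT; have h2 := hsync x true false isT.
move: h1 h2; rewrite /corr => h1 h2.
have E : proj u x false *t proj u x true + proj u x true *t proj u x false =
   (2^-1 : C) *: (1%:M *t 1%:M - w x).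
  rewrite /proj /w; apply/matrixP => i j; rewrite !mxE.
  by field.
have SP a b : SS (proj u x a *t proj u x b).
  rewrite /proj tensmxZl tensmxZr tensmxDl !tensmxDr.
  by case: a; case: b; rewrite ?tensNl ?tensNr; sSS.
have [_ s1 _] := hs.
have := congr1 s E; rewrite (stD hs) ?h1 ?h2 ?addr0 ?(stZ hs SS_0) //; last by sSS.
rewrite -scaleN1r (stD hs) ?(stZ hs SS_0) ?tens11 ?s1; try by sSS.
move/esym/eqP; rewrite mulf_eq0 invr_eq0 pnatr_eq0 /= mulN1r subr_eq0.
by move/eqP.
Qed.


End Cl.
End Scal.

Section P2.
Variable R : realType.
Local Notation C := R[i].
Variable X : finType.
Variable d : nat.
Variable u : X -> 'M[C]_d.
Hypothesis hu : clifford_rep u.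

Lemma main_in (hX : ~~ odd #|X|) (hd : (0 < d)%N) (s : 'M[C]_(d * d) -> C)
  (hs : state_on (in_SS u) s) (hsync : synchronous u s) :
  (exists phi : 'M[C]_(d * d) -> C,
      state_on (in_CC u) phi /\ forall M, in_SS u M -> phi M = s M) /\
  (forall phi1 phi2 : 'M[C]_(d * d) -> C,
      state_on (in_CC u) phi1 -> (forall M, in_SS u M -> phi1 M = s M) ->
      state_on (in_CC u) phi2 -> (forall M, in_SS u M -> phi2 M = s M) ->
      forall M, in_CC u M -> phi1 M = phi2 M).
Proof.
have hs' : state_on (SS u) s := hs.
have [p1 p2 p3] := phi0_state hu hX hd.
have pSS : state_on (SS u) (phi0 hu hX hd) by split => // *; [apply: p1 | apply: p3].
have vals f (hf : state_on (SS u) f) : f 1%:M = 1 -> (forall x, f (w u x) = 1) ->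
   (forall i j, i != j -> forall x,
      (genS u i *t genS u j) *m w u x = - (w u x *m (genS u i *t genS u j)) ->
      f (genS u i *t genS u j) = 0) ->
   forall i j, f (genS u i *t genS u j) = (i == j)%:R.
  move=> f1 fw fa i j; case: (eqVneq i j) => [eij|nij].
    subst j; case: i => [x|] /=; [apply: fw | by rewrite tens11].
  by have [x hx] := gen_anti hu hX nij; rewrite (fa _ _ nij x hx).
have s1 : s 1%:M = 1 by case: hs.
have sval := vals s hs' s1 (sync_w hs' hsync).
have pval := vals _ pSS p2 (phi0_w hu hX hd).
have sumv f (hf : state_on (SS u) f) (c : option X -> option X -> C) :
    f (\sum_i \sum_j c i j *: (genS u i *t genS u j)) =
    \sum_i \sum_j c i j * f (genS u i *t genS u j).
  rewrite (stsum hf (SS_0 u) (@SS_D _ _ _ u)) => [|i].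
    apply: eq_bigr => i _; rewrite (stsum hf (SS_0 u) (@SS_D _ _ _ u)) => [|j].
      by apply: eq_bigr => j _; rewrite (stZ hf (SS_0 u)) //; apply: SS_B.
    by apply: SS_Z; apply: SS_B.
  by apply: (spansum (B := fun i j => genS u i *t genS u j)) => j; apply: SS_Z; apply: SS_B.
split.
  exists (phi0 hu hX hd); split => [|M [c ->]]; first by split => // *; [apply: p1 | apply: p3].
  rewrite !sumv //; apply: eq_bigr => i _; apply: eq_bigr => j _.
  rewrite sval ?pval //.
  - by move=> i' j' nij x hx; apply: (phi0_anti hu hX hd hx).
  - move=> i' j' _ x hx; apply: (pyth hs' (SS_w u x) (SS_B u i' j') (w_adj hu x)
      (genT_adj hu i' j') (w_sq hu x) (genT_sq hu i' j') hx (sync_w hs' hsync x)).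
move=> phi1 phi2 h1 e1 h2 e2 M hM.
have h1' : state_on (CC u) phi1 := h1.
have h2' : state_on (CC u) phi2 := h2.
have w1 x : phi1 (w u x) = 1 by rewrite e1 ?(sync_w hs' hsync) //; apply: SS_w.
have w2 x : phi2 (w u x) = 1 by rewrite e2 ?(sync_w hs' hsync) //; apply: SS_w.
suff : CC u M /\ phi1 M = phi2 M by case.
apply: (@CC_ind _ _ _ u (fun M => CC u M /\ phi1 M = phi2 M) M hM).
- by split; [apply: CC_0 | rewrite (st0 h1' (CC_0 u)) (st0 h2' (CC_0 u))].
- move=> M1 M2 [c1 q1] [c2 q2]; split; first by apply: CC_D.
  by rewrite (stD h1') ?(stD h2') // q1 q2.
move=> k S T; split; first by apply: CC_Z; apply: CC_B.
rewrite (stZ h1' (CC_0 u)) ?(stZ h2' (CC_0 u)); try by apply: CC_B.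
by rewrite (phi_B hu h1' w1 hX) (phi_B hu h2' w2 hX).
Qed.
End P2.

Unset Implicit Arguments.

Theorem mainTheorem17 (R : realType) (X : finType) (d : nat)
    (u : X -> 'M[R[i]]_d) (s : 'M[R[i]]_(d * d) -> R[i]) :
  ~~ odd #|X| ->
  (0 < d)%N ->
  clifford_rep u ->
  state_on (in_SS u) s ->
  synchronous u s ->
  (exists phi : 'M[R[i]]_(d * d) -> R[i],
      state_on (in_CC u) phi /\ forall M, in_SS u M -> phi M = s M) /\
  (forall phi1 phi2 : 'M[R[i]]_(d * d) -> R[i],
      state_on (in_CC u) phi1 -> (forall M, in_SS u M -> phi1 M = s M) ->
      state_on (in_CC u) phi2 -> (forall M, in_SS u M -> phi2 M = s M) ->
      forall M, in_CC u M -> phi1 M = phi2 M).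
Proof.
move=> hX hd hu hs hsync; exact: (main_in hu hX hd hs hsync).
Qed.
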